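(* Consider the RLC circuit $-L\dot I=\Gamma V+RI-Bu_s$, $C\dot V=\Gamma^\top I-GV$ and its extended dynamics (obtained by adjoining the time-differentiated equations $-L\ddot I=\Gamma\dot V+R\dot I-B\upsilon_s$, $C\ddot V=\Gamma^\top\dot I-G\dot V$ and $\dot u_s=\upsilon_s$), with extended state $(I,V,\dot I,\dot V,u_s)$ and input $\upsilon_s\in\mathbb{R}^m$. Assume: $L,C$ constant symmetric positive definite; $R,G$ symmetric positive semi-definite; $I,V$ (and $\dot I,\dot V$) are measured; and there exist a constant $V^\star\in\mathbb{R}^\rho_+$, a constant $\bar u_s\in\mathbb{R}^m$ and $\bar I\in\mathbb{R}^\sigma$ with $0=\Gamma V^\star+R\bar I-B\bar u_s$, $0=\Gamma^\top\bar I-GV^\star$. Apply the control $$\upsilon_s=\mu_s-k_iB^\top(I-\bar I)-k_dy_s,\qquad y_s=B^\top\dot I,$$ with scalars $k_d>0$, $k_i>0$ and new input $\mu_s\in\mathbb{R}^m$. Then: (a) the closed-loop system defines a passive map $\mu_s\mapsto y_s$; (b) if $\mu_s=0$ and either (i) $R>0$ and $G>0$, or (ii) $G>0$ and $\Gamma^\top$ has full column rank, then the solution of the closed-loop system asymptotically converges to the set $$\{(I,V,\dot I,\dot V,u_s):\ \dot V=0,\ \dot I=0,\ \dot u_s=0,\ B^\top(I-\bar I)=0\}.$$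
   Context: $I\in\mathbb{R}^\sigma$, $V\in\mathbb{R}^\rho$, $u_s\in\mathbb{R}^m$; $\Gamma\in\mathbb{R}^{\sigma\times\rho}$; $B\in\mathbb{R}^{\sigma\times m}$ has full column rank. A map $\mu\mapsto y$ is passive if there is a storage function $S\ge0$ of the (closed-loop) state with $\dot S\le\mu^\top y$ along trajectories. $R>0$ means symmetric positive definite. *)

(* Defs.v *)
From HB Require Import structures.
From mathcomp Require Import all_boot all_order all_algebra.
From mathcomp Require Import all_classical all_reals all_analysis.
Set Implicit Arguments. Unset Strict Implicit. Unset Printing Implicit Defensive.
Import Order.TTheory GRing.Theory Num.Theory.
Import numFieldNormedType.Exports.
Local Open Scope ring_scope.
Local Open Scope classical_set_scope.

Definition posdef (R : realType) n (A : 'M[R]_n) : Prop :=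
  A^T = A /\ forall x : 'cV[R]_n, x != 0 -> 0 < (x^T *m A *m x) 0 0.
Definition psd (R : realType) n (A : 'M[R]_n) : Prop :=
  A^T = A /\ forall x : 'cV[R]_n, 0 <= (x^T *m A *m x) 0 0.

(* Extended state (I, V, Idot, Vdot, u_s), as nested pairs
   ((((I, V), Idot), Vdot), u_s). *)
Definition ext_state (R : realType) (s r m : nat) : Type :=
  ('cV[R]_s * 'cV[R]_r * 'cV[R]_s * 'cV[R]_r * 'cV[R]_m)%type.

Section Proj.
Context {R : realType} {s r m : nat}.
Definition stI (z : ext_state R s r m) : 'cV[R]_s := z.1.1.1.1.
Definition stV (z : ext_state R s r m) : 'cV[R]_r := z.1.1.1.2.
Definition stId (z : ext_state R s r m) : 'cV[R]_s := z.1.1.2.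
Definition stVd (z : ext_state R s r m) : 'cV[R]_r := z.1.2.
Definition stus (z : ext_state R s r m) : 'cV[R]_m := z.2.
End Proj.

Definition ctrl (R : realType) (s r m : nat) (B : 'M[R]_(s, m))
  (Ibar : 'cV[R]_s) (ki kd : R) (mu : 'cV[R]_m) (z : ext_state R s r m)
  : 'cV[R]_m :=
  mu - ki *: (B^T *m (stI z - Ibar)) - kd *: (B^T *m stId z).

Definition out_ys (R : realType) (s r m : nat) (B : 'M[R]_(s, m))
  (z : ext_state R s r m) : 'cV[R]_m := B^T *m stId z.

Definition closed_loop (R : realType) (s r m : nat)
  (L Rm : 'M[R]_s) (C G : 'M[R]_r) (Gam : 'M[R]_(s, r)) (B : 'M[R]_(s, m))
  (Ibar : 'cV[R]_s) (ki kd : R) (mu : R -> 'cV[R]_m)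
  (x : R -> ext_state R s r m) : Prop :=
  let I := stI \o x in let V := stV \o x in let Id := stId \o x in
  let Vd := stVd \o x in let us := stus \o x in
  forall t : R, 0 < t ->
    [/\ derivable I t 1, derivable V t 1, derivable Id t 1,
        derivable Vd t 1 & derivable us t 1] /\
    [/\ derive1 I t = Id t, derive1 V t = Vd t,
        - (L *m derive1 I t) = Gam *m V t + Rm *m I t - B *m us t &
        C *m derive1 V t = Gam^T *m I t - G *m V t] /\
    [/\ - (L *m derive1 Id t) = Gam *m Vd t + Rm *m Id t
                             - B *m ctrl B Ibar ki kd (mu t) (x t),
        C *m derive1 Vd t = Gam^T *m Id t - G *m Vd t &
        derive1 us t = ctrl B Ibar ki kd (mu t) (x t)].

Definition cl_passive (R : realType) (s r m : nat)
  (L Rm : 'M[R]_s) (C G : 'M[R]_r) (Gam : 'M[R]_(s, r)) (B : 'M[R]_(s, m))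
  (Ibar : 'cV[R]_s) (ki kd : R) : Prop :=
  exists S : ext_state R s r m -> R,
    (forall z, 0 <= S z) /\
    forall (mu : R -> 'cV[R]_m) (x : R -> ext_state R s r m),
      closed_loop L Rm C G Gam B Ibar ki kd mu x ->
      forall t : R, 0 < t ->
        derivable (S \o x) t 1 /\
        derive1 (S \o x) t <= ((mu t)^T *m out_ys B (x t)) 0 0.

(* The target set {Vdot = 0, Idot = 0, d/dt u_s = 0, B^T (I - Ibar) = 0},
   where (with mu_s = 0) d/dt u_s is given by the closed-loop law. *)
Definition target_set (R : realType) (s r m : nat) (B : 'M[R]_(s, m))
  (Ibar : 'cV[R]_s) (ki kd : R) : set (ext_state R s r m) :=
  [set z | [/\ stVd z = 0, stId z = 0, ctrl B Ibar ki kd 0 z = 0 &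
               B^T *m (stI z - Ibar) = 0]].

Definition converges_to_set (R : realType) (T : pseudoMetricType R)
  (x : R -> T) (A : set T) : Prop :=
  forall e : R, 0 < e ->
    exists t0 : R, forall t : R, t0 <= t -> exists2 a, A a & ball a e (x t).

(* Main.v *)
Require Import Defs.
From HB Require Import structures.
From mathcomp Require Import all_boot all_order all_algebra.
From mathcomp Require Import all_classical all_reals all_analysis.
From mathcomp Require Import ring lra.
Set Implicit Arguments. Unset Strict Implicit. Unset Printing Implicit Defensive.
Import Order.TTheory GRing.Theory Num.Theory.
Import numFieldNormedType.Exports.
Local Open Scope ring_scope.
Local Open Scope classical_set_scope.
Section Tools.
Variable R : realType.

Lemma entry_derive (p q : nat) (f : R -> 'M[R]_(p,q)) t i j :
  derivable f t 1 -> derivable (fun u : R => f u i j) t 1 /\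
  derive1 (fun u : R => f u i j) t = derive1 f t i j.
Proof.
move=> df; split; first exact: ((derivable_mxP f t 1).1 df i j).
by rewrite !derive1E (derive_mx df) mxE.
Qed.

Lemma qformE n p (a : 'cV[R]_n) (M : 'M[R]_(n,p)) (b : 'cV[R]_p) :
  (a^T *m M *m b) 0 0 = \sum_(j < p) \sum_(i < n) a i 0 * M i j * b j 0.
Proof.
rewrite mxE; apply: eq_bigr => j _; rewrite mxE big_distrl /=.
by apply: eq_bigr => i _; rewrite mxE.
Qed.

Lemma qform_derive n p (f : R -> 'cV[R]_n) (M : 'M[R]_(n,p)) (g : R -> 'cV[R]_p) t :
  derivable f t 1 -> derivable g t 1 ->
  derivable (fun u : R => ((f u)^T *m M *m g u) 0 0) t 1 /\
  derive1 (fun u : R => ((f u)^T *m M *m g u) 0 0) t =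
    ((derive1 f t)^T *m M *m g t + (f t)^T *m M *m derive1 g t) 0 0.
Proof.
move=> df dg.
have -> : (fun u : R => ((f u)^T *m M *m g u) 0 0) =
   \sum_(j < p) \sum_(i < n) (fun u : R => f u i 0 * M i j * g u j 0).
  rewrite fct_sumE; apply/funext => u /=; rewrite qformE.
  by apply: eq_bigr => j _; rewrite fct_sumE.
have dh : forall j i, is_derive t 1 (fun u : R => f u i 0 * M i j * g u j 0)
   (derive1 f t i 0 * M i j * g t j 0 + f t i 0 * M i j * derive1 g t j 0).
  move=> j i.
  have [df1 df2] := entry_derive i 0 df.
  have [dg1 dg2] := entry_derive j 0 dg.
  have -> : (fun u : R => f u i 0 * M i j * g u j 0) =
     ((fun u : R => f u i 0) * cst (M i j)) * (fun u : R => g u j 0) by [].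
  have Hf := derivableP df1; have Hg := derivableP dg1.
  rewrite -!derive1E df2 dg2 in Hf Hg.
  have H := is_deriveM (is_deriveM Hf (is_derive_cst (M i j) t 1)) Hg.
  apply: is_derive_eq; rewrite scaler0 add0r /=.
  transitivity (f t i 0 * M i j * derive1 g t j 0 + g t j 0 * (M i j * derive1 f t i 0)); first by [].
  ring.
have := @is_derive_sum R R R p _ t 1 _ (fun j => @is_derive_sum R R R n _ t 1 _ (dh j)).
move=> H; split; first exact: ex_derive.
rewrite derive1E derive_val mxE !qformE -big_split /=; apply: eq_bigr => j _.
by rewrite -big_split.
Qed.

Definition n2 n (a : 'cV[R]_n) : R := (a^T *m a) 0 0.

Lemma n2E n (a : 'cV[R]_n) : n2 a = \sum_(i < n) a i 0 ^+ 2.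
Proof. by rewrite /n2 mxE; apply: eq_bigr => i _; rewrite mxE expr2. Qed.

Lemma n2_ge0 n (a : 'cV[R]_n) : 0 <= n2 a.
Proof. by rewrite n2E; apply: sumr_ge0 => i _; exact: sqr_ge0. Qed.

Lemma entry_le_n2 n (a : 'cV[R]_n) i : a i 0 ^+ 2 <= n2 a.
Proof.
rewrite n2E (bigD1 i) //= lerDl; apply: sumr_ge0 => j _; exact: sqr_ge0.
Qed.

Lemma qform_absle n p (a : 'cV[R]_n) (M : 'M[R]_(n,p)) (b : 'cV[R]_p) :
  `|(a^T *m M *m b) 0 0| <= (\sum_(j < p) \sum_(i < n) `|M i j|) * (n2 a + n2 b).
Proof.
rewrite qformE big_distrl /=; apply: (le_trans (ler_norm_sum _ _ _)).
apply: ler_sum => j _; rewrite big_distrl /=.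
apply: (le_trans (ler_norm_sum _ _ _)); apply: ler_sum => i _.
rewrite !normrM.
have h1 := entry_le_n2 a i; have h2 := entry_le_n2 b j.
rewrite -real_normK ?num_real // in h1; rewrite -real_normK ?num_real // in h2.
have hab : `|a i 0| * `|b j 0| <= n2 a + n2 b.
  have := normr_ge0 (a i 0); have := normr_ge0 (b j 0). nra.
rewrite mulrAC [X in _ <= X]mulrC; exact: ler_wpM2r.
Qed.

Lemma trD p q (a b : 'M[R]_(p,q)) : (a + b)^T = a^T + b^T.
Proof. by apply/matrixP => i j; rewrite !mxE. Qed.
Lemma trN p q (a : 'M[R]_(p,q)) : (- a)^T = - a^T.
Proof. by apply/matrixP => i j; rewrite !mxE. Qed.
Lemma trZ p q c (a : 'M[R]_(p,q)) : (c *: a)^T = c *: a^T.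
Proof. by apply/matrixP => i j; rewrite !mxE. Qed.

Lemma trmx11 (M : 'M[R]_1) : M^T 0 0 = M 0 0.
Proof. by rewrite mxE. Qed.

Lemma posdef_unit n (P : 'M[R]_n) : posdef P -> P \in unitmx.
Proof.
move=> [Ps Pp]; rewrite -row_free_unit; apply: inj_row_free => v vP.
apply/eqP; apply/negPn/negP => v0.
have vT : v^T != 0 :> 'cV[R]_n.
  apply: contra v0 => /eqP h; apply/eqP; rewrite -[v]trmxK h.
  by apply/matrixP => i j; rewrite !mxE.
by move: (Pp _ vT); rewrite trmxK vP mul0mx mxE ltxx.
Qed.

Lemma psd_of_posdef n (P : 'M[R]_n) : posdef P -> forall x : 'cV[R]_n, 0 <= (x^T *m P *m x) 0 0.
Proof.
move=> [_ Pp] x; have [->|/Pp /ltW //] := eqVneq x 0.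
by rewrite mulmx0 mxE.
Qed.

Lemma posdef_lb n (P : 'M[R]_n) : posdef P ->
  exists2 c, 0 < c & forall x : 'cV[R]_n, c * n2 x <= (x^T *m P *m x) 0 0.
Proof.
move=> Ppd; have Pu := posdef_unit Ppd; have [Ps _] := Ppd.
set Q := invmx P.
set K := \sum_(j < n) \sum_(i < n) `|Q^T i j|.
have K0 : 0 <= K by apply: sumr_ge0 => j _; apply: sumr_ge0 => i _.
pose s := 1 / (K + 1).
have s0 : 0 < s by rewrite divr_gt0 // ltr_wpDl.
exists (s * s); first by rewrite mulr_gt0.
move=> x; set y := Q *m x.
have Py : P *m y = x by rewrite /y mulKVmx.
have sK : s * (K + 1) = 1 by rewrite /s mul1r mulVf // gt_eqF // ltr_wpDl.
have := psd_of_posdef Ppd (x - s *: y).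
have e1 : (x^T *m P *m y) 0 0 = n2 x by rewrite -mulmxA Py.
have e2 : (y^T *m P *m x) 0 0 = n2 x.
  by rewrite -trmx11 !trmx_mul !trmxK Ps mulmxA -/y e1.
have e3 : (y^T *m P *m y) 0 0 = (x^T *m Q^T *m x) 0 0.
  by rewrite -mulmxA Py /y trmx_mul.
have E : ((x - s *: y)^T *m P *m (x - s *: y)) 0 0 =
   (x^T *m P *m x) 0 0 - s * (x^T *m P *m y) 0 0 - s * (y^T *m P *m x) 0 0
   + s ^+ 2 * (y^T *m P *m y) 0 0.
  rewrite !(trD, trN, trZ) !(mulmxDl, mulmxDr, mulNmx, mulmxN).
  rewrite -!(scalemxAl, scalemxAr).
  set A1 := x^T *m P *m x; set A2 := x^T *m P *m y; set A3 := y^T *m P *m x; set A4 := y^T *m P *m y.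
  clearbody A1 A2 A3 A4; rewrite !mxE; ring.
rewrite E e1 e2 e3 => H.
have := qform_absle x Q^T x; rewrite -/K => HK.
have Hc : (x^T *m Q^T *m x) 0 0 <= K * (n2 x + n2 x).
  exact: le_trans (ler_norm _) HK.
have n0 := n2_ge0 x.
have s1 : s * K <= 1 by rewrite -[X in _ <= X]sK; apply: ler_wpM2l; [exact: ltW | lra].
set c := (x^T *m Q^T *m x) 0 0 in Hc H *.
set a := (x^T *m P *m x) 0 0 in H *.
have h1 : s ^+ 2 * c <= s ^+ 2 * (K * (n2 x + n2 x)) by rewrite ler_wpM2l // sqr_ge0.
have h3 : s ^+ 2 * (K * (n2 x + n2 x)) = 2 * s * n2 x - 2 * (s * s * n2 x).
  have -> : s ^+ 2 * (K * (n2 x + n2 x)) = 2 * s * (s * K) * n2 x by ring.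
  have -> : s * K = 1 - s by rewrite -sK; ring.
  ring.
have h4 : 0 <= s * s * n2 x by rewrite mulr_ge0 // mulr_ge0 // ltW.
lra.
Qed.


Lemma mvt_ex (f : R -> R) a b : 0 < a -> a <= b ->
  (forall u, 0 < u -> derivable f u 1) ->
  exists2 c, a <= c <= b & f b - f a = derive1 f c * (b - a).
Proof.
move=> a0 ab df.
have [||c cab ->] := @MVT_segment R f (derive1 f) a b ab.
- move=> u; rewrite in_itv /= => /andP[au _].
  rewrite derive1E; apply: derivableP; apply: df; exact: lt_trans au.
- apply: derivable_within_continuous => u; rewrite in_itv /= => /andP[au _].
  apply: df; exact: lt_le_trans au.
- by exists c => //; move: cab; rewrite in_itv.
Qed.

Definition bnd (f : R -> R) := exists M, forall t, 1 <= t -> `|f t| <= M.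
Definition ev0 (f : R -> R) := forall e, 0 < e -> exists T, forall t, T <= t -> `|f t| <= e.

Lemma bnd_cst c : bnd (fun _ => c).
Proof. by exists `|c|. Qed.

Lemma bndD f g : bnd f -> bnd g -> bnd (fun t => f t + g t).
Proof.
move=> [M1 h1] [M2 h2]; exists (M1 + M2) => t t1.
exact: le_trans (ler_normD _ _) (lerD (h1 _ t1) (h2 _ t1)).
Qed.

Lemma bndN f : bnd f -> bnd (fun t => - f t).
Proof. by move=> [M h]; exists M => t t1; rewrite normrN h. Qed.

Lemma bndM f g : bnd f -> bnd g -> bnd (fun t => f t * g t).
Proof.
move=> [M1 h1] [M2 h2]; exists (M1 * M2) => t t1.
rewrite normrM; apply: ler_pM; [exact: normr_ge0|exact: normr_ge0|exact: h1|exact: h2].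
Qed.

Lemma bnd_sum (I : Type) (r : seq I) (P : pred I) (F : I -> R -> R) :
  (forall i, bnd (F i)) -> bnd (fun t => \sum_(i <- r | P i) F i t).
Proof.
move=> h; elim: r => [|i r IH].
  by exists 0 => t _; rewrite big_nil normr0.
have -> : (fun t => \sum_(j <- i :: r | P j) F j t) =
  (fun t => (if P i then F i t else 0) + \sum_(j <- r | P j) F j t).
  by apply/funext => t; rewrite big_cons; case: (P i); rewrite ?add0r.
apply: bndD => //; case: (P i) => //; exact: bnd_cst.
Qed.

Lemma ev0_cst0 : ev0 (fun _ => 0).
Proof. by move=> e e0; exists 0 => t _; rewrite normr0 ltW. Qed.

Lemma ev0D f g : ev0 f -> ev0 g -> ev0 (fun t => f t + g t).
Proof.
move=> h1 h2 e e0.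
have e2 : 0 < e / 2 by rewrite divr_gt0.
have [T1 H1] := h1 _ e2; have [T2 H2] := h2 _ e2.
exists (Num.max T1 T2) => t; rewrite ge_max => /andP[t1 t2].
apply: le_trans (ler_normD _ _) _.
by rewrite [e]splitr; apply: lerD; [exact: H1|exact: H2].
Qed.

Lemma ev0N f : ev0 f -> ev0 (fun t => - f t).
Proof. by move=> h e e0; have [T H] := h e e0; exists T => t tT; rewrite normrN H. Qed.

Lemma ev0Mb f g : ev0 f -> bnd g -> ev0 (fun t => f t * g t).
Proof.
move=> h [M hM] e e0.
have M1 : 0 < `|M| + 1 by rewrite ltr_wpDl.
have [T H] := h (e / (`|M| + 1)) (divr_gt0 e0 M1).
exists (Num.max T 1) => t; rewrite ge_max => /andP[tT t1].
rewrite normrM.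
have hg : `|g t| <= `|M| + 1.
  apply: le_trans (hM _ t1) _; apply: le_trans (ler_norm _) _; lra.
apply: le_trans (ler_pM _ _ (H _ tT) hg) _ => //.
by rewrite divfK // gt_eqF.
Qed.

Lemma ev0bM f g : bnd g -> ev0 f -> ev0 (fun t => g t * f t).
Proof.
move=> hg hf; have := ev0Mb hf hg.
by have -> : (fun t => f t * g t) = (fun t => g t * f t) by apply/funext => t; rewrite mulrC.
Qed.

Lemma ev0_sum (I : Type) (r : seq I) (P : pred I) (F : I -> R -> R) :
  (forall i, ev0 (F i)) -> ev0 (fun t => \sum_(i <- r | P i) F i t).
Proof.
move=> h; elim: r => [|i r IH].
  have -> : (fun t => \sum_(j <- [::] | P j) F j t) = fun _ => 0.
    by apply/funext => t; rewrite big_nil.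
  exact: ev0_cst0.
have -> : (fun t => \sum_(j <- i :: r | P j) F j t) =
  (fun t => (if P i then F i t else 0) + \sum_(j <- r | P j) F j t).
  by apply/funext => t; rewrite big_cons; case: (P i); rewrite ?add0r.
apply: ev0D => //; case: (P i) => //; exact: ev0_cst0.
Qed.

Lemma ev0_le f g : ev0 f -> (exists T, forall t, T <= t -> `|g t| <= `|f t|) -> ev0 g.
Proof.
move=> h [T0 H0] e e0; have [T H] := h e e0.
exists (Num.max T T0) => t; rewrite ge_max => /andP[tT tT0].
exact: le_trans (H0 _ tT0) (H _ tT).
Qed.


Definition bndv n (v : R -> 'cV[R]_n) := forall i, bnd (fun t => v t i 0).
Definition ev0v n (v : R -> 'cV[R]_n) := forall i, ev0 (fun t => v t i 0).

Lemma bnd_qform n p (a : R -> 'cV[R]_n) (M : 'M[R]_(n,p)) (b : R -> 'cV[R]_p) :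
  bndv a -> bndv b -> bnd (fun t => ((a t)^T *m M *m b t) 0 0).
Proof.
move=> ha hb.
have -> : (fun t => ((a t)^T *m M *m b t) 0 0) =
  (fun t => \sum_(j < p) \sum_(i < n) a t i 0 * M i j * b t j 0).
  by apply/funext => t; rewrite qformE.
apply: bnd_sum => j; apply: bnd_sum => i.
apply: bndM => //; apply: bndM => //; exact: bnd_cst.
Qed.

Lemma ev0_qform_l n p (a : R -> 'cV[R]_n) (M : 'M[R]_(n,p)) (b : R -> 'cV[R]_p) :
  ev0v a -> bndv b -> ev0 (fun t => ((a t)^T *m M *m b t) 0 0).
Proof.
move=> ha hb.
have -> : (fun t => ((a t)^T *m M *m b t) 0 0) =
  (fun t => \sum_(j < p) \sum_(i < n) a t i 0 * M i j * b t j 0).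
  by apply/funext => t; rewrite qformE.
apply: ev0_sum => j; apply: ev0_sum => i.
apply: ev0Mb => //; apply: ev0Mb => //; exact: bnd_cst.
Qed.

Lemma ev0_qform_r n p (a : R -> 'cV[R]_n) (M : 'M[R]_(n,p)) (b : R -> 'cV[R]_p) :
  bndv a -> ev0v b -> ev0 (fun t => ((a t)^T *m M *m b t) 0 0).
Proof.
move=> ha hb.
have -> : (fun t => ((a t)^T *m M *m b t) 0 0) =
  (fun t => \sum_(j < p) \sum_(i < n) (a t i 0 * M i j) * b t j 0).
  by apply/funext => t; rewrite qformE.
apply: ev0_sum => j; apply: ev0_sum => i.
apply: ev0bM => //; apply: bndM => //; exact: bnd_cst.
Qed.

Lemma bndv_mul n p (M : 'M[R]_(p,n)) (v : R -> 'cV[R]_n) :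
  bndv v -> bndv (fun t => M *m v t).
Proof.
move=> hv i.
have -> : (fun t => (M *m v t) i 0) = (fun t => \sum_(j < n) M i j * v t j 0).
  by apply/funext => t; rewrite mxE.
apply: bnd_sum => j; apply: bndM => //; exact: bnd_cst.
Qed.

Lemma ev0v_mul n p (M : 'M[R]_(p,n)) (v : R -> 'cV[R]_n) :
  ev0v v -> ev0v (fun t => M *m v t).
Proof.
move=> hv i.
have -> : (fun t => (M *m v t) i 0) = (fun t => \sum_(j < n) M i j * v t j 0).
  by apply/funext => t; rewrite mxE.
apply: ev0_sum => j; apply: ev0bM => //; exact: bnd_cst.
Qed.

Lemma bndv_add n (u v : R -> 'cV[R]_n) : bndv u -> bndv v -> bndv (fun t => u t + v t).
Proof.
move=> hu hv i.
have -> : (fun t => (u t + v t) i 0) = (fun t => u t i 0 + v t i 0).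
  by apply/funext => t; rewrite mxE.
exact: bndD.
Qed.

Lemma ev0v_add n (u v : R -> 'cV[R]_n) : ev0v u -> ev0v v -> ev0v (fun t => u t + v t).
Proof.
move=> hu hv i.
have -> : (fun t => (u t + v t) i 0) = (fun t => u t i 0 + v t i 0).
  by apply/funext => t; rewrite mxE.
exact: ev0D.
Qed.

Lemma bndv_opp n (u : R -> 'cV[R]_n) : bndv u -> bndv (fun t => - u t).
Proof.
move=> hu i.
have -> : (fun t => (- u t) i 0) = (fun t => - u t i 0).
  by apply/funext => t; rewrite mxE.
exact: bndN.
Qed.

Lemma ev0v_opp n (u : R -> 'cV[R]_n) : ev0v u -> ev0v (fun t => - u t).
Proof.
move=> hu i.
have -> : (fun t => (- u t) i 0) = (fun t => - u t i 0).
  by apply/funext => t; rewrite mxE.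
exact: ev0N.
Qed.

Lemma bndv_cst n (c : 'cV[R]_n) : bndv (fun _ => c).
Proof. move=> i; exact: bnd_cst. Qed.

Lemma bndv_n2 n (v : R -> 'cV[R]_n) : bnd (fun t => n2 (v t)) -> bndv v.
Proof.
move=> [M hM] i; exists (1 + M) => t t1.
have h1 := entry_le_n2 (v t) i; have h2 := hM t t1.
rewrite -real_normK ?num_real // in h1.
have h3 := normr_ge0 (v t i 0).
have h4 : n2 (v t) <= M by exact: le_trans (ler_norm _) h2.
nra.
Qed.

Lemma ev0v_n2 n (v : R -> 'cV[R]_n) : ev0 (fun t => n2 (v t)) -> ev0v v.
Proof.
move=> h i e e0.
have [T H] := h (e * e) (mulr_gt0 e0 e0).
exists T => t tT.
have h1 := entry_le_n2 (v t) i; have h2 := H t tT.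
rewrite -real_normK ?num_real // in h1.
have h3 := normr_ge0 (v t i 0).
have h4 : n2 (v t) <= e * e by exact: le_trans (ler_norm _) h2.
nra.
Qed.

Lemma lip_of_bnd (g h : R -> R) :
  (forall t, 0 < t -> derivable g t 1) -> (forall t, 1 <= t -> derive1 g t = h t) ->
  bnd h -> exists M, forall u v, 1 <= u -> u <= v -> `|g v - g u| <= M * (v - u).
Proof.
move=> dg gh [M hM]; exists M => u v u1 uv.
have [c /andP[uc cv] ->] := mvt_ex (lt_le_trans ltr01 u1) uv dg.
rewrite normrM gh; last exact: le_trans uc.
rewrite [`|v - u|]ger0_norm ?subr_ge0 //.
by apply: ler_wpM2r; [rewrite subr_ge0|exact: hM (le_trans u1 uc)].
Qed.


Lemma barbalat (S D : R -> R) :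
  (forall t, 0 < t -> derivable S t 1 /\ derive1 S t = - D t) ->
  (forall t, 0 <= S t) -> (forall t, 0 < t -> 0 <= D t) ->
  (exists M, forall u v, 1 <= u -> u <= v -> `|D v - D u| <= M * (v - u)) ->
  ev0 D.
Proof.
move=> hS S0 D0 [M hM] e e0.
have dS : forall u, 0 < u -> derivable S u 1 by move=> u /hS [].
pose E := [set - S t | t in [set t : R | 1 <= t]].
have hE : has_sup E.
  split; first by exists (- S 1), 1 => //=.
  exists 0 => _ [u _ <-]; rewrite oppr_le0; exact: S0.
pose K := `|M| + 1.
have K0 : 0 < K by rewrite ltr_wpDl.
pose d := e / (2 * K).
have d0 : 0 < d by rewrite divr_gt0 // mulr_gt0.
have dK : K * d = e / 2 by rewrite /d; field; rewrite gt_eqF.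
pose eta := e * d / 2.
have eta0 : 0 < eta by rewrite divr_gt0 // mulr_gt0.
have [_ [T0 T01 <-] HT0] := sup_adherent eta0 hE.
exists T0 => t tT0.
have t1 : 1 <= t by exact: le_trans tT0.
have t0 : 0 < t by exact: lt_le_trans t1.
rewrite ger0_norm; last exact: D0.
rewrite leNgt; apply/negP => Dt.
have td : t <= t + d by lra.
have [c /andP[tc ctd] Ec] := mvt_ex t0 td dS.
have [_ Sc] := hS c (lt_le_trans t0 tc).
rewrite Sc in Ec.
have Hc : `|D c - D t| <= M * (c - t) := hM t c t1 tc.
have Mle : M * (c - t) <= K * d.
  have : M <= K by rewrite /K; apply: le_trans (ler_norm M) _; lra.
  have : c - t <= d by lra.
  have : 0 <= c - t by lra.
  have := normr_ge0 M. rewrite /K. nra.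
have Dc : e / 2 < D c.
  have := ler_norm (D t - D c); rewrite distrC; lra.
have mono : S t <= S T0.
  have [c' /andP[Tc' c't] Ec'] := mvt_ex (lt_le_trans ltr01 T01) tT0 dS.
  have [_ Sc'] := hS c' (lt_le_trans (lt_le_trans ltr01 T01) Tc').
  rewrite Sc' in Ec'.
  have : 0 <= D c' := D0 c' (lt_le_trans (lt_le_trans ltr01 T01) Tc').
  have : 0 <= t - T0 by lra.
  nra.
have sup_ub : - S (t + d) <= sup E.
  apply: sup_upper_bound => //; exists (t + d) => //=.
  apply: le_trans t1 _; lra.
have : eta < D c * d.
  rewrite /eta; have := d0; move: Dc; nra.
lra.
Qed.


Lemma deriv_ev0 (f g : R -> R) :
  (forall t, 0 < t -> derivable f t 1) -> (forall t, 1 <= t -> derive1 f t = g t) ->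
  ev0 f ->
  (exists M, forall u v, 1 <= u -> u <= v -> `|g v - g u| <= M * (v - u)) -> ev0 g.
Proof.
move=> df fg hf [M hM] e e0.
pose K := `|M| + 1.
have K0 : 0 < K by rewrite ltr_wpDl.
pose h := e / (2 * K).
have h0 : 0 < h by rewrite divr_gt0 // mulr_gt0.
have hK : K * h = e / 2 by rewrite /h; field; rewrite gt_eqF.
have four : (0:R) < 4 by lra.
have [T1 H1] := hf (h * e / 4) (divr_gt0 (mulr_gt0 h0 e0) four).
exists (Num.max T1 1) => t; rewrite ge_max => /andP[tT t1].
have t0 : 0 < t by exact: lt_le_trans t1.
have th : t <= t + h by lra.
have [c /andP[tc cth] Ec] := mvt_ex t0 th df.
rewrite fg in Ec; last exact: le_trans tc.
have Hc : `|g c - g t| <= M * (c - t) := hM t c t1 tc.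
have Mle : M * (c - t) <= K * h.
  have : M <= K by rewrite /K; apply: le_trans (ler_norm M) _; lra.
  have : c - t <= h by lra.
  have : 0 <= c - t by lra.
  have := normr_ge0 M. rewrite /K. nra.
have F1 := H1 (t + h) (le_trans tT th).
have F2 := H1 t tT.
move: Hc F1 F2; rewrite !ler_norml => /andP[A1 A2] /andP[B1 B2] /andP[C1 C2].
have : - (h * e / 2) <= g c * h <= h * e / 2.
  apply/andP; split; lra.
move=> /andP[G1 G2].
have gc1 : g c <= e / 2 by nra.
have gc2 : - (e / 2) <= g c by nra.
apply/andP; split; lra.
Qed.


Lemma bndv_ext n (u v : R -> 'cV[R]_n) : (forall t, 1 <= t -> u t = v t) -> bndv v -> bndv u.
Proof.
move=> uv hv i; have [M hM] := hv i; exists M => t t1; rewrite uv //; exact: hM.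
Qed.

Lemma ev0v_ext n (u v : R -> 'cV[R]_n) : (forall t, 1 <= t -> u t = v t) -> ev0v v -> ev0v u.
Proof.
move=> uv hv i e e0; have [T hT] := hv i e e0; exists (Num.max T 1) => t.
rewrite ge_max => /andP[tT t1]; rewrite uv //; exact: hT.
Qed.

Lemma bndv_scale n c (u : R -> 'cV[R]_n) : bndv u -> bndv (fun t => c *: u t).
Proof.
move=> hu i.
have -> : (fun t => (c *: u t) i 0) = (fun t => c * u t i 0).
  by apply/funext => t; rewrite mxE.
apply: bndM => //; exact: bnd_cst.
Qed.

Lemma ev0v_scale n c (u : R -> 'cV[R]_n) : ev0v u -> ev0v (fun t => c *: u t).
Proof.
move=> hu i.
have -> : (fun t => (c *: u t) i 0) = (fun t => c * u t i 0).
  by apply/funext => t; rewrite mxE.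
apply: ev0bM => //; exact: bnd_cst.
Qed.

Lemma ev0M f g : ev0 f -> ev0 g -> ev0 (fun t => f t * g t).
Proof.
move=> hf hg e e0.
have [T1 H1] := hf e e0; have [T2 H2] := hg 1 ltr01.
exists (Num.max T1 T2) => t; rewrite ge_max => /andP[t1 t2].
rewrite normrM -[e]mulr1; apply: ler_pM => //; [exact: H1|exact: H2].
Qed.

Lemma ev0_n2 n (v : R -> 'cV[R]_n) : ev0v v -> ev0 (fun t => n2 (v t)).
Proof.
move=> hv.
have -> : (fun t => n2 (v t)) = (fun t => \sum_(i < n) v t i 0 * v t i 0).
  by apply/funext => t; rewrite n2E; apply: eq_bigr => i _; rewrite expr2.
apply: ev0_sum => i; exact: ev0M.
Qed.

Lemma lin_derive n p (M : 'M[R]_(p,n)) (f : R -> 'cV[R]_n) t :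
  derivable f t 1 -> derivable (fun u : R => M *m f u) t 1 /\
  derive1 (fun u : R => M *m f u) t = M *m derive1 f t.
Proof.
move=> df.
have hd : forall i, is_derive t 1 (fun u : R => (M *m f u) i 0) ((M *m derive1 f t) i 0).
  move=> i.
  have -> : (fun u : R => (M *m f u) i 0) = \sum_(j < n) (fun u : R => M i j * f u j 0).
    by rewrite fct_sumE; apply/funext => u /=; rewrite mxE.
  rewrite mxE; apply: is_derive_sum => j.
  have [d1 d2] := entry_derive j 0 df.
  have Hf := derivableP d1; rewrite -derive1E d2 in Hf.
  have -> : (fun u : R => M i j * f u j 0) = cst (M i j) * (fun u : R => f u j 0) by [].
  have H := is_deriveM (is_derive_cst (M i j) t 1) Hf.
  apply: is_derive_eq; rewrite scaler0 addr0 /=; by [].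
have dM : derivable (fun u : R => M *m f u) t 1.
  apply/derivable_mxP => i j; rewrite (ord1 j); by case: (hd i).
split => //; rewrite derive1E (derive_mx dM); apply/matrixP => i j.
by rewrite (ord1 j) mxE; case: (hd i).
Qed.

Lemma qswap n p (a : 'cV[R]_n) (M : 'M[R]_(n,p)) (b : 'cV[R]_p) :
  (a^T *m M *m b) 0 0 = (b^T *m M^T *m a) 0 0.
Proof. by rewrite -trmx11 !trmx_mul trmxK mulmxA. Qed.

Lemma e00D (P Q : 'M[R]_1) : (P + Q) 0 0 = P 0 0 + Q 0 0. Proof. by rewrite mxE. Qed.
Lemma e00N (P : 'M[R]_1) : (- P) 0 0 = - P 0 0. Proof. by rewrite mxE. Qed.
Lemma e00Z c (P : 'M[R]_1) : (c *: P) 0 0 = c * P 0 0. Proof. by rewrite mxE. Qed.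

Definition lip (f : R -> R) :=
  exists M, forall u v, 1 <= u -> u <= v -> `|f v - f u| <= M * (v - u).
Definition lipv n (p : R -> 'cV[R]_n) := forall i, lip (fun t => p t i 0).

Lemma lip_cst c : lip (fun _ => c).
Proof. by exists 0 => u v _ _; rewrite subrr normr0 mul0r. Qed.

Lemma lipD f g : lip f -> lip g -> lip (fun t => f t + g t).
Proof.
move=> [M1 h1] [M2 h2]; exists (M1 + M2) => u v u1 uv.
have -> : f v + g v - (f u + g u) = (f v - f u) + (g v - g u) by ring.
apply: le_trans (ler_normD _ _) _; rewrite mulrDl; apply: lerD; [exact: h1|exact: h2].
Qed.

Lemma lipN f : lip f -> lip (fun t => - f t).
Proof.
move=> [M h]; exists M => u v u1 uv.
have -> : - f v - - f u = - (f v - f u) by ring.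
by rewrite normrN; exact: h.
Qed.

Lemma lipcM c f : lip f -> lip (fun t => c * f t).
Proof.
move=> [M h]; exists (`|c| * M) => u v u1 uv.
have -> : c * f v - c * f u = c * (f v - f u) by ring.
rewrite normrM -mulrA; apply: ler_wpM2l => //; exact: h.
Qed.

Lemma lip_sum (I : Type) (l : seq I) (P : pred I) (F : I -> R -> R) :
  (forall i, lip (F i)) -> lip (fun t => \sum_(i <- l | P i) F i t).
Proof.
move=> h; elim: l => [|i l IH].
  have -> : (fun t => \sum_(j <- [::] | P j) F j t) = fun _ => 0.
    by apply/funext => t; rewrite big_nil.
  exact: lip_cst.
have -> : (fun t => \sum_(j <- i :: l | P j) F j t) =
  (fun t => (if P i then F i t else 0) + \sum_(j <- l | P j) F j t).
  by apply/funext => t; rewrite big_cons; case: (P i); rewrite ?add0r.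
apply: lipD => //; case: (P i) => //; exact: lip_cst.
Qed.

Lemma lipv_mul n p (M : 'M[R]_(p,n)) (v : R -> 'cV[R]_n) :
  lipv v -> lipv (fun t => M *m v t).
Proof.
move=> hv i.
have -> : (fun t => (M *m v t) i 0) = (fun t => \sum_(j < n) M i j * v t j 0).
  by apply/funext => t; rewrite mxE.
apply: lip_sum => j; exact: lipcM.
Qed.

Lemma lipv_add n (u v : R -> 'cV[R]_n) : lipv u -> lipv v -> lipv (fun t => u t + v t).
Proof.
move=> hu hv i.
have -> : (fun t => (u t + v t) i 0) = (fun t => u t i 0 + v t i 0).
  by apply/funext => t; rewrite mxE.
exact: lipD.
Qed.

Lemma lipv_opp n (u : R -> 'cV[R]_n) : lipv u -> lipv (fun t => - u t).
Proof.
move=> hu i.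
have -> : (fun t => (- u t) i 0) = (fun t => - u t i 0).
  by apply/funext => t; rewrite mxE.
exact: lipN.
Qed.

Lemma lipv_scale n c (u : R -> 'cV[R]_n) : lipv u -> lipv (fun t => c *: u t).
Proof.
move=> hu i.
have -> : (fun t => (c *: u t) i 0) = (fun t => c * u t i 0).
  by apply/funext => t; rewrite mxE.
exact: lipcM.
Qed.

Lemma lipv_cst n (c : 'cV[R]_n) : lipv (fun _ => c).
Proof. move=> i; exact: lip_cst. Qed.

Lemma lipv_ext n (u v : R -> 'cV[R]_n) : (forall t, 1 <= t -> u t = v t) -> lipv v -> lipv u.
Proof.
move=> uv hv i; have [M hM] := hv i; exists M => a b a1 ab.
rewrite !uv //; [exact: hM | exact: le_trans ab].
Qed.

Lemma lipv_of_deriv n (p dp : R -> 'cV[R]_n) :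
  (forall t, 0 < t -> derivable p t 1) -> (forall t, 1 <= t -> derive1 p t = dp t) ->
  bndv dp -> lipv p.
Proof.
move=> d e b i.
have d1 : forall t, 0 < t -> derivable (fun t => p t i 0) t 1.
  by move=> t t0; have [] := entry_derive i 0 (d t t0).
have e1 : forall t, 1 <= t -> derive1 (fun t => p t i 0) t = dp t i 0.
  move=> t t1; have [_ ->] := entry_derive i 0 (d t (lt_le_trans ltr01 t1)).
  by rewrite e.
exact: (lip_of_bnd d1 e1 (b i)).
Qed.

Lemma ball_mx n p (A B : 'M[R]_(n,p)) e : 0 < e -> (forall i j, `|A i j - B i j| < e) -> ball A e B.
Proof.
move=> e0 h; rewrite -ball_normE /ball_ /=.
rewrite /Num.Def.normr /= mx_normrE; apply: bigmax_lt => // -[i j] _; rewrite /= !mxE; exact: h.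
Qed.

Lemma ball_pair (T1 T2 : pseudoMetricType R) (a c : T1) (b d : T2) e :
  ball a e c -> ball b e d -> ball (a, b) e (c, d).
Proof. by move=> h1 h2; split. Qed.

Lemma n2_small n (v : 'cV[R]_n) e : 0 < e -> n2 v <= e * e / 4 -> forall i, `|v i 0| < e.
Proof.
move=> e0 h i; have h1 := entry_le_n2 v i.
rewrite -real_normK ?num_real // in h1.
have h3 := normr_ge0 (v i 0).
rewrite ltNge; apply/negP => h4. nra.
Qed.

End Tools.

Section Main.
Variables (R : realType) (s r m : nat) (L Rm : 'M[R]_s) (C G : 'M[R]_r)
  (Gam : 'M[R]_(s, r)) (B : 'M[R]_(s, m)) (Ibar : 'cV[R]_s) (ki kd : R).

Lemma energy_alg (a a' e : 'cV[R]_s) (v v' : 'cV[R]_r) (u mu : 'cV[R]_m) :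
  L^T = L -> C^T = C ->
  - (L *m a') = Gam *m v + Rm *m a - B *m u ->
  C *m v' = Gam^T *m a - G *m v ->
  u = mu - ki *: (B^T *m e) - kd *: (B^T *m a) ->
  2^-1 * ((a'^T *m L *m a + a^T *m L *m a') 0 0 + (v'^T *m C *m v + v^T *m C *m v') 0 0
     + ki * (a^T *m (B *m B^T) *m e + e^T *m (B *m B^T) *m a) 0 0)
  = - ((a^T *m Rm *m a) 0 0 + (v^T *m G *m v) 0 0 + kd * (a^T *m (B *m B^T) *m a) 0 0)
    + (mu^T *m (B^T *m a)) 0 0.
Proof.
move=> Ls Cs eL eC eu.
rewrite !e00D (qswap a') Ls (qswap v') Cs (qswap a _ e) trmx_mul trmxK.
rewrite -!(mulmxA a^T) -!(mulmxA v^T) -[L *m a']opprK eL eC eu.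
rewrite !(mulmxDr, mulmxN, mulNmx, mulmxDl) -!(scalemxAr, scalemxAl).
rewrite !(e00D, e00N, e00Z) !mulmxA.
rewrite (qswap v _ a) trmxK -(mulmxA e^T B) (qswap e) trmx_mul trmxK mulmxA.
rewrite (qswap mu) trmxK.
set X1 := (a^T *m Gam *m v) 0 0; set X2 := (a^T *m Rm *m a) 0 0.
set X3 := (a^T *m B *m mu) 0 0; set X4 := (a^T *m B *m B^T *m e) 0 0.
set X5 := (a^T *m B *m B^T *m a) 0 0; set X6 := (v^T *m G *m v) 0 0.
by field.
Qed.

Definition Sto (z : ext_state R s r m) : R :=
  2^-1 * (((stId z)^T *m L *m stId z) 0 0 + ((stVd z)^T *m C *m stVd z) 0 0
    + ki * ((stI z - Ibar)^T *m (B *m B^T) *m (stI z - Ibar)) 0 0).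

Definition Dis (z : ext_state R s r m) : R :=
  ((stId z)^T *m Rm *m stId z) 0 0 + ((stVd z)^T *m G *m stVd z) 0 0
  + kd * ((stId z)^T *m (B *m B^T) *m stId z) 0 0.

Lemma sto_derive (mu : R -> 'cV[R]_m) x t :
  L^T = L -> C^T = C ->
  closed_loop L Rm C G Gam B Ibar ki kd mu x -> 0 < t ->
  derivable (Sto \o x) t 1 /\
  derive1 (Sto \o x) t = - Dis (x t) + ((mu t)^T *m out_ys B (x t)) 0 0.
Proof.
move=> Ls Cs cl t0.
have [[dI dV dId dVd dus] [[eI eV eL eC] [eId eVd eus]]] := cl t t0.
have [q1 Q1] := qform_derive L dId dId.
have [q2 Q2] := qform_derive C dVd dVd.
have hE : is_derive t 1 (fun u : R => stI (x u) - Ibar) (derive1 (stI \o x) t).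
  have := is_deriveB (derivableP dI) (is_derive_cst Ibar t 1).
  by rewrite subr0 -derive1E.
have dE : derivable (fun u : R => stI (x u) - Ibar) t 1 by case: hE.
have DE : derive1 (fun u : R => stI (x u) - Ibar) t = derive1 (stI \o x) t.
  by rewrite derive1E; case: hE.
have [q3 Q3] := qform_derive (B *m B^T) dE dE.
rewrite DE eI in Q3.
pose f1 := fun u : R => (((stId \o x) u)^T *m L *m (stId \o x) u) 0 0.
pose f2 := fun u : R => (((stVd \o x) u)^T *m C *m (stVd \o x) u) 0 0.
pose f3 := fun u : R => ((stI (x u) - Ibar)^T *m (B *m B^T) *m (stI (x u) - Ibar)) 0 0.
have H1 : is_derive t 1 f1 (derive1 f1 t) by rewrite derive1E; exact: derivableP.
have H2 : is_derive t 1 f2 (derive1 f2 t) by rewrite derive1E; exact: derivableP.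
have H3 : is_derive t 1 f3 (derive1 f3 t) by rewrite derive1E; exact: derivableP.
have H := is_deriveZ (2^-1) (is_deriveD (is_deriveD H1 H2) (is_deriveZ ki H3)).
have -> : Sto \o x = 2^-1 *: (f1 + f2 + ki *: f3) by [].
split; first by case: H.
rewrite derive1E derive_val Q1 Q2 Q3.
rewrite /Dis /out_ys /=.
have := @energy_alg (stId (x t)) (derive1 (stId \o x) t)
  (stI (x t) - Ibar) (stVd (x t)) (derive1 (stVd \o x) t)
  (ctrl B Ibar ki kd (mu t) (x t)) (mu t) Ls Cs eId eVd erefl.
move=> <-; by [].
Qed.

Lemma dis_derive (mu : R -> 'cV[R]_m) x t :
  closed_loop L Rm C G Gam B Ibar ki kd mu x -> 0 < t ->
  derivable (Dis \o x) t 1 /\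
  derive1 (Dis \o x) t =
    ((derive1 (stId \o x) t)^T *m Rm *m stId (x t) + (stId (x t))^T *m Rm *m derive1 (stId \o x) t) 0 0
  + ((derive1 (stVd \o x) t)^T *m G *m stVd (x t) + (stVd (x t))^T *m G *m derive1 (stVd \o x) t) 0 0
  + kd * ((derive1 (stId \o x) t)^T *m (B *m B^T) *m stId (x t)
          + (stId (x t))^T *m (B *m B^T) *m derive1 (stId \o x) t) 0 0.
Proof.
move=> cl t0.
have [[dI dV dId dVd dus] _] := cl t t0.
have [q1 Q1] := qform_derive Rm dId dId.
have [q2 Q2] := qform_derive G dVd dVd.
have [q3 Q3] := qform_derive (B *m B^T) dId dId.
pose f1 := fun u : R => (((stId \o x) u)^T *m Rm *m (stId \o x) u) 0 0.
pose f2 := fun u : R => (((stVd \o x) u)^T *m G *m (stVd \o x) u) 0 0.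
pose f3 := fun u : R => (((stId \o x) u)^T *m (B *m B^T) *m (stId \o x) u) 0 0.
have H1 : is_derive t 1 f1 (derive1 f1 t) by rewrite derive1E; exact: derivableP.
have H2 : is_derive t 1 f2 (derive1 f2 t) by rewrite derive1E; exact: derivableP.
have H3 : is_derive t 1 f3 (derive1 f3 t) by rewrite derive1E; exact: derivableP.
have H := is_deriveD (is_deriveD H1 H2) (is_deriveZ kd H3).
have -> : Dis \o x = f1 + f2 + kd *: f3 by [].
split; first by case: H.
by rewrite derive1E derive_val Q1 Q2 Q3.
Qed.

Lemma qBB_n2 (e : 'cV[R]_s) : (e^T *m (B *m B^T) *m e) 0 0 = n2 (B^T *m e).
Proof. by rewrite /n2 trmx_mul trmxK !mulmxA. Qed.

Lemma Dis_ge0 z : psd Rm -> psd G -> 0 < kd -> 0 <= Dis z.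
Proof.
move=> [_ hR] [_ hG] kd0; rewrite /Dis qBB_n2.
apply: addr_ge0; first exact: addr_ge0.
by apply: mulr_ge0; [exact: ltW|exact: n2_ge0].
Qed.

Lemma Sto_ge0 z : posdef L -> posdef C -> 0 < ki -> 0 <= Sto z.
Proof.
move=> Lp Cp ki0; rewrite /Sto qBB_n2; apply: mulr_ge0 => //.
apply: addr_ge0; first apply: addr_ge0; try exact: psd_of_posdef.
by apply: mulr_ge0; [exact: ltW|exact: n2_ge0].
Qed.

Lemma passive_part : posdef L -> posdef C -> psd Rm -> psd G -> 0 < kd -> 0 < ki ->
  cl_passive L Rm C G Gam B Ibar ki kd.
Proof.
move=> Lp Cp Rp Gp kd0 ki0; exists Sto; split; first by move=> z; exact: Sto_ge0.
move=> mu x cl t t0.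
have [d ->] := sto_derive (Lp.1) (Cp.1) cl t0.
split => //; have := Dis_ge0 (x t) Rp Gp kd0; lra.
Qed.

End Main.

Section Conv.
Variables (R : realType) (s r m : nat) (L Rm : 'M[R]_s) (C G : 'M[R]_r)
  (Gam : 'M[R]_(s, r)) (B : 'M[R]_(s, m)) (Ibar : 'cV[R]_s) (ki kd : R).

Lemma conv_part (x : R -> ext_state R s r m) :
  \rank B = m -> posdef L -> posdef C -> psd Rm -> psd G -> 0 < kd -> 0 < ki ->
  closed_loop L Rm C G Gam B Ibar ki kd (fun _ => 0) x ->
  ((posdef Rm /\ posdef G) \/ (posdef G /\ \rank (Gam^T) = s)) ->
  converges_to_set x (@target_set R s r m B Ibar ki kd).
Proof.
move=> rB Lp Cp Rp Gp kd0 ki0 cl hcase.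
pose a := fun t => stId (x t).
pose v := fun t => stVd (x t).
pose e := fun t => stI (x t) - Ibar.
pose w := fun t => B^T *m e t.
pose S := Sto L C B Ibar ki \o x.
pose D := Dis Rm G B kd \o x.
have hS : forall t, 0 < t -> derivable S t 1 /\ derive1 S t = - D t.
  move=> t t0; have [d ->] := sto_derive (Lp.1) (Cp.1) cl t0.
  by split => //; rewrite /out_ys trmx0 mul0mx mxE addr0.
have S0 : forall t, 0 <= S t by move=> t; exact: (Sto_ge0 B Ibar (x t) Lp Cp ki0).
have D0 : forall t, 0 <= D t by move=> t; exact: (Dis_ge0 B (x t) Rp Gp kd0).
have Smono : forall t, 1 <= t -> S t <= S 1.
  move=> t t1; have dS : forall u, 0 < u -> derivable S u 1 by move=> u /hS [].
  have [c /andP[c1 ct] Ec] := mvt_ex ltr01 t1 dS.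
  have [_ Sc] := hS c (lt_le_trans ltr01 c1); rewrite Sc in Ec.
  have := D0 c; have : 0 <= t - 1 by lra. nra.
have [cL cL0 HL] := posdef_lb Lp.
have [cC cC0 HC] := posdef_lb Cp.
have HS : forall t, [/\ cL * n2 (a t) <= 2 * S t, cC * n2 (v t) <= 2 * S t
    & ki * n2 (w t) <= 2 * S t].
  move=> t; rewrite /S /Sto /= qBB_n2 -/(a t) -/(v t) -/(e t) -/(w t).
  have h1 := HL (a t); have h2 := HC (v t).
  have h1' := psd_of_posdef Lp (a t); have h2' := psd_of_posdef Cp (v t).
  have h3 : 0 <= ki * n2 (w t) by apply: mulr_ge0; [exact: ltW|exact: n2_ge0].
  split; lra.
have bA : bndv a.
  apply: bndv_n2; exists (2 * S 1 / cL) => t t1.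
  rewrite ger0_norm ?n2_ge0 // ler_pdivlMr // mulrC.
  have [h _ _] := HS t; have := Smono t t1; lra.
have bV : bndv v.
  apply: bndv_n2; exists (2 * S 1 / cC) => t t1.
  rewrite ger0_norm ?n2_ge0 // ler_pdivlMr // mulrC.
  have [_ h _] := HS t; have := Smono t t1; lra.
have bW : bndv w.
  apply: bndv_n2; exists (2 * S 1 / ki) => t t1.
  rewrite ger0_norm ?n2_ge0 // ler_pdivlMr // mulrC.
  have [_ _ h] := HS t; have := Smono t t1; lra.
have Lu := posdef_unit Lp; have Cu := posdef_unit Cp.
pose uc := fun t => ctrl B Ibar ki kd 0 (x t).
have ucE : forall t, uc t = 0 - ki *: w t - kd *: (B^T *m a t) by [].
pose ad := fun t => invmx L *m (- (Gam *m v t + Rm *m a t - B *m uc t)).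
pose vd := fun t => invmx C *m (Gam^T *m a t - G *m v t).
have Ead : forall t, 0 < t -> derive1 (stId \o x) t = ad t.
  move=> t t0; have [_ [_ [eId _ _]]] := cl t t0.
  by rewrite /ad -eId opprK mulKmx.
have Evd : forall t, 0 < t -> derive1 (stVd \o x) t = vd t.
  move=> t t0; have [_ [_ [_ eVd _]]] := cl t t0.
  by rewrite /vd -eVd mulKmx.
have bUc : bndv uc.
  apply: (@bndv_ext _ _ uc (fun t => 0 - ki *: w t - kd *: (B^T *m a t))) => //.
  apply: bndv_add; first apply: bndv_add.
  - exact: bndv_cst.
  - by apply: bndv_opp; apply: bndv_scale.
  - by apply: bndv_opp; apply: bndv_scale; apply: bndv_mul.
have bAd : bndv ad.
  apply: bndv_mul; apply: bndv_opp; apply: bndv_add; first apply: bndv_add.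
  - exact: bndv_mul.
  - exact: bndv_mul.
  - by apply: bndv_opp; apply: bndv_mul.
have bVd : bndv vd.
  apply: bndv_mul; apply: bndv_add; first exact: bndv_mul.
  by apply: bndv_opp; apply: bndv_mul.
have dA : forall t, 0 < t -> derivable a t 1 by move=> t t0; have [[_ _ h _ _] _] := cl t t0.
have dV : forall t, 0 < t -> derivable v t 1 by move=> t t0; have [[_ _ _ h _] _] := cl t t0.
have hE : forall t, 0 < t -> derivable e t 1 /\ derive1 e t = a t.
  move=> t t0; have [[dI _ _ _ _] [[eI _ _ _] _]] := cl t t0.
  have H := is_deriveB (derivableP dI) (is_derive_cst Ibar t 1).
  split; first by case: H.
  by rewrite derive1E; case: H => _ ->; rewrite subr0 -derive1E eI.
have hW : forall t, 0 < t -> derivable w t 1 /\ derive1 w t = B^T *m a t.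
  move=> t t0; have [d1 d2] := hE t t0; have [d3 d4] := lin_derive B^T d1.
  by split => //; rewrite d4 d2.
have lipA : lipv a.
  apply: (lipv_of_deriv dA) bAd => t t1; exact: Ead (lt_le_trans ltr01 t1).
have lipV : lipv v.
  apply: (lipv_of_deriv dV) bVd => t t1; exact: Evd (lt_le_trans ltr01 t1).
have lipW : lipv w.
  apply: (@lipv_of_deriv _ _ w (fun t => B^T *m a t)).
  - by move=> t t0; have [] := hW t t0.
  - by move=> t t1; have [] := hW t (lt_le_trans ltr01 t1).
  - exact: bndv_mul.
have lipUc : lipv uc.
  apply: (@lipv_ext _ _ uc (fun t => 0 - ki *: w t - kd *: (B^T *m a t))) => //.
  apply: lipv_add; first apply: lipv_add.
  - exact: lipv_cst.
  - by apply: lipv_opp; apply: lipv_scale.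
  - by apply: lipv_opp; apply: lipv_scale; apply: lipv_mul.
have lipAd : lipv ad.
  apply: lipv_mul; apply: lipv_opp; apply: lipv_add; first apply: lipv_add.
  - exact: lipv_mul.
  - exact: lipv_mul.
  - by apply: lipv_opp; apply: lipv_mul.
have lipVd : lipv vd.
  apply: lipv_mul; apply: lipv_add; first exact: lipv_mul.
  by apply: lipv_opp; apply: lipv_mul.
pose BB := B *m B^T.
pose hD := fun t => ((ad t)^T *m Rm *m a t) 0 0 + ((a t)^T *m Rm *m ad t) 0 0
  + (((vd t)^T *m G *m v t) 0 0 + ((v t)^T *m G *m vd t) 0 0)
  + kd * (((ad t)^T *m BB *m a t) 0 0 + ((a t)^T *m BB *m ad t) 0 0).
have EhD : forall t, 0 < t -> derivable D t 1 /\ derive1 D t = hD t.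
  move=> t t0; have [d1 d2] := dis_derive cl t0.
  by split => //; rewrite d2 Ead // Evd // !e00D.
have bhD : bnd hD.
  apply: bndD; first apply: bndD.
  - by apply: bndD; apply: bnd_qform.
  - by apply: bndD; apply: bnd_qform.
  - by apply: bndM; [exact: bnd_cst|apply: bndD; apply: bnd_qform].
have lipD : lip D.
  apply: (@lip_of_bnd _ D hD) => //.
  - by move=> t t0; have [] := EhD t t0.
  - by move=> t t1; have [] := EhD t (lt_le_trans ltr01 t1).
have evD : ev0 D.
  exact: (barbalat hS S0 (fun t _ => D0 t) lipD).
have qR0 : forall t, 0 <= ((a t)^T *m Rm *m a t) 0 0 by move=> t; exact: Rp.2.
have qG0 : forall t, 0 <= ((v t)^T *m G *m v t) 0 0 by move=> t; exact: Gp.2.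
have qB0 : forall t, 0 <= kd * ((a t)^T *m BB *m a t) 0 0.
  by move=> t; rewrite qBB_n2 mulr_ge0 ?n2_ge0 // ltW.
have DE : forall t, D t = ((a t)^T *m Rm *m a t) 0 0 + ((v t)^T *m G *m v t) 0 0
   + kd * ((a t)^T *m BB *m a t) 0 0 by [].
have fromD : forall n (p : R -> 'cV[R]_n) c, 0 < c -> (forall t, c * n2 (p t) <= D t) -> ev0v p.
  move=> n p c c0 hp; apply: ev0v_n2.
  apply: (ev0_le (ev0Mb evD (bnd_cst c^-1))); exists 0 => t _.
  rewrite ger0_norm ?n2_ge0 // ger0_norm; last by rewrite mulr_ge0 ?invr_ge0 // ltW.
  by rewrite ler_pdivlMr // mulrC.
have evV : ev0v v.
  have Gpd : posdef G by case: hcase => -[].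
  have [cG cG0 HG] := posdef_lb Gpd.
  apply: (fromD _ _ cG) => // t; have := HG (v t); have := qR0 t; have := qB0 t.
  rewrite DE; lra.
have evA : ev0v a.
  case: hcase => [[Rpd _]|[_ rG]].
    have [cR cR0 HR] := posdef_lb Rpd.
    apply: (fromD _ _ cR) => // t; have := HR (a t); have := qG0 t; have := qB0 t.
    rewrite DE; lra.
  have evVd : ev0v vd.
    move=> i; apply: (@deriv_ev0 _ (fun t => v t i 0)).
    - by move=> t t0; have [] := entry_derive i 0 (dV t t0).
    - move=> t t1; have [_ ->] := entry_derive i 0 (dV t (lt_le_trans ltr01 t1)).
      by rewrite -[v]/(stVd \o x) Evd // (lt_le_trans ltr01 t1).
    - exact: evV.
    - exact: lipVd.
  have evGa : ev0v (fun t => Gam^T *m a t).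
    apply: (@ev0v_ext _ _ _ (fun t => C *m vd t + G *m v t)).
      by move=> t _; rewrite /vd mulKVmx // subrK.
    by apply: ev0v_add; apply: ev0v_mul.
  have : row_free Gam by rewrite /row_free -mxrank_tr rG.
  case/row_freeP => Y GY.
  apply: (@ev0v_ext _ _ _ (fun t => Y^T *m (Gam^T *m a t))); last exact: ev0v_mul.
  by move=> t _; rewrite mulmxA -trmx_mul GY trmx1 mul1mx.
have evAd : ev0v ad.
  move=> i; apply: (@deriv_ev0 _ (fun t => a t i 0)).
  - by move=> t t0; have [] := entry_derive i 0 (dA t t0).
  - move=> t t1; have [_ ->] := entry_derive i 0 (dA t (lt_le_trans ltr01 t1)).
    by rewrite -[a]/(stId \o x) Ead // (lt_le_trans ltr01 t1).
  - exact: evA.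
  - exact: lipAd.
have evBuc : ev0v (fun t => B *m uc t).
  apply: (@ev0v_ext _ _ _ (fun t => L *m ad t + Gam *m v t + Rm *m a t)).
    move=> t _; rewrite /ad mulKVmx //.
    by rewrite opprB -addrA subrK.
  by apply: ev0v_add; first apply: ev0v_add; apply: ev0v_mul.
have : row_free B^T by rewrite /row_free mxrank_tr rB.
case/row_freeP => X BX.
have evUc : ev0v uc.
  apply: (@ev0v_ext _ _ _ (fun t => X^T *m (B *m uc t))); last exact: ev0v_mul.
  move=> t _; rewrite mulmxA.
  have -> : X^T *m B = 1%:M by rewrite -[B]trmxK -trmx_mul BX trmx1.
  by rewrite mul1mx.
have evW : ev0v w.
  apply: (@ev0v_ext _ _ _ (fun t => (- ki^-1) *: (uc t + kd *: (B^T *m a t)))).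
    move=> t _; rewrite ucE sub0r subrK scaleNr scalerN opprK scalerA.
    by rewrite mulVf ?gt_eqF // scale1r.
  by apply: ev0v_scale; apply: ev0v_add => //; apply: ev0v_scale; apply: ev0v_mul.
move=> eps eps0.
have q0 : 0 < eps * eps / 4 by rewrite divr_gt0 ?mulr_gt0 //; lra.
have [T1 H1] := ev0_n2 evA q0.
have [T2 H2] := ev0_n2 evV q0.
have [T3 H3] := ev0_n2 (ev0v_mul X evW) q0.
exists (Num.max T1 (Num.max T2 T3)) => t; rewrite !ge_max => /and3P[t1 t2 t3].
have n2A : n2 (a t) <= eps * eps / 4 by exact: le_trans (ler_norm _) (H1 t t1).
have n2V : n2 (v t) <= eps * eps / 4 by exact: le_trans (ler_norm _) (H2 t t2).
have n2W : n2 (X *m w t) <= eps * eps / 4 by exact: le_trans (ler_norm _) (H3 t t3).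
exists ((((stI (x t) - X *m w t, stV (x t)), 0), 0), stus (x t)).
  have BT0 : B^T *m ((x t).1.1.1.1 - X *m w t - Ibar) = 0.
    rewrite [_ - _ - Ibar]addrAC mulmxDr mulmxN mulmxA BX mul1mx.
    by rewrite /w /e subrr.
  rewrite /target_set /=; split => //.
    by rewrite /ctrl /stId /stI /= BT0 mulmx0 !scaler0 !subr0.
have -> : x t = ((((stI (x t), stV (x t)), stId (x t)), stVd (x t)), stus (x t)).
  by rewrite /stI /stV /stId /stVd /stus; case: (x t) => [[[[? ?] ?] ?] ?].
move: (X *m w t) n2W => P n2P.
apply: ball_pair; last exact: ballxx.
apply: ball_pair.
  apply: ball_pair.
    apply: ball_pair; last exact: ballxx.
    apply: ball_mx => // i j; rewrite (ord1 j) !mxE.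
    rewrite /stI /=.
    have -> : (x t).1.1.1.1 i 0 - P i 0 - (x t).1.1.1.1 i 0 = - P i 0 by ring.
    by rewrite normrN; exact: n2_small.
  apply: ball_mx => // i j; rewrite (ord1 j) !mxE sub0r normrN; exact: n2_small.
apply: ball_mx => // i j; rewrite (ord1 j) !mxE sub0r normrN; exact: n2_small.
Qed.
End Conv.

Theorem theorem1 (R : realType) (s r m : nat)
  (L Rm : 'M[R]_s) (C G : 'M[R]_r) (Gam : 'M[R]_(s, r)) (B : 'M[R]_(s, m))
  (Vstar : 'cV[R]_r) (ubar : 'cV[R]_m) (Ibar : 'cV[R]_s) (ki kd : R) :
  \rank B = m ->
  posdef L -> posdef C -> psd Rm -> psd G ->
  (forall i, 0 <= Vstar i 0) ->
  0 = Gam *m Vstar + Rm *m Ibar - B *m ubar ->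
  0 = Gam^T *m Ibar - G *m Vstar ->
  0 < kd -> 0 < ki ->
  cl_passive L Rm C G Gam B Ibar ki kd /\
  (forall x : R -> ext_state R s r m,
     closed_loop L Rm C G Gam B Ibar ki kd (fun _ => 0) x ->
     ((posdef Rm /\ posdef G) \/ (posdef G /\ \rank (Gam^T) = s)) ->
     converges_to_set x (@target_set R s r m B Ibar ki kd)).
Proof.
move=> rB Lp Cp Rp Gp _ _ _ kd0 ki0; split; first exact: passive_part.
move=> x cl hc; exact: (conv_part rB Lp Cp Rp Gp kd0 ki0 cl hc).
Qed.
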